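(* Let $P>0$ and let $H_1\ge H_2\ge 0$ with $H_1>0$. For $\alpha\in[0,1]$ put $$r_1(\alpha)=\log_2(1+\alpha P H_1),\qquad r_2(\alpha)=\log_2\Big(1+\frac{PH_2(1-\alpha)}{\alpha H_2 P+1}\Big).$$ Then the maximum of $\min\{r_1(\alpha),r_2(\alpha)\}$ over $\alpha\in[0,1]$ is attained at $$\alpha^{\star}=\frac{2H_2}{\sqrt{(H_1+H_2)^2+4H_1H_2^2P}+(H_1+H_2)}.$$
   Context: Two-user downlink NOMA: a base station with total transmit power $P$ sends the superposition $\sqrt{\alpha P}s_1+\sqrt{(1-\alpha)P}s_2$, $H_i=|h_i|^2$ is the channel gain to Receiver $i$, and the noise has unit variance. When $H_1\ge H_2$, Receiver 2 decodes $s_2$ treating $s_1$ as noise (rate $r_2(\alpha)$), and Receiver 1 removes $s_2$ by successive interference cancellation and then decodes $s_1$ (rate $r_1(\alpha)$). *)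

(* Defs.v *)
From Stdlib Require Import Reals.
Open Scope R_scope.

Definition log2 (x : R) : R := ln x / ln 2.

(* rate of Receiver 1 (after SIC) *)
Definition r1 (P H1 alpha : R) : R := log2 (1 + alpha * P * H1).

(* rate of Receiver 2 (treating s1 as noise) *)
Definition r2 (P H2 alpha : R) : R :=
  log2 (1 + P * H2 * (1 - alpha) / (alpha * H2 * P + 1)).

Definition min_rate (P H1 H2 alpha : R) : R := Rmin (r1 P H1 alpha) (r2 P H2 alpha).

Definition alpha_star (P H1 H2 : R) : R :=
  2 * H2 / (sqrt ((H1 + H2) ^ 2 + 4 * H1 * H2 ^ 2 * P) + (H1 + H2)).

(* Main.v *)
Require Import Defs.
From Stdlib Require Import Reals Lra Psatz.
Open Scope R_scope.

Lemma log2_le (x y : R) : 0 < x -> x <= y -> log2 x <= log2 y.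
Proof.
  intros hx hxy. unfold log2, Rdiv.
  apply Rmult_le_compat_r.
  - left; apply Rinv_0_lt_compat. rewrite <- ln_1. apply ln_increasing; lra.
  - destruct hxy as [h|h]. left; apply ln_increasing; lra. right; subst; reflexivity.
Qed.

Theorem theorem1 (P H1 H2 : R) :
  0 < P -> 0 <= H2 -> H2 <= H1 -> 0 < H1 ->
  0 <= alpha_star P H1 H2 <= 1 /\
  (forall alpha : R, 0 <= alpha <= 1 ->
     min_rate P H1 H2 alpha <= min_rate P H1 H2 (alpha_star P H1 H2)).
Proof.
  intros hP hH2 h21 hH1.
  assert (hX : 0 <= H1 * H2 ^ 2 * P) by (apply Rmult_le_pos; [apply Rmult_le_pos; nra | lra]).
  assert (hD : 0 <= (H1 + H2) ^ 2 + 4 * H1 * H2 ^ 2 * P) by nra.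
  pose proof (sqrt_pos ((H1 + H2) ^ 2 + 4 * H1 * H2 ^ 2 * P)) as hs.
  pose proof (sqrt_sqrt _ hD) as hs2.
  unfold alpha_star.
  remember (sqrt ((H1 + H2) ^ 2 + 4 * H1 * H2 ^ 2 * P)) as s eqn:Hs.
  clear Hs.
  remember (H1 + H2) as S eqn:HS.
  remember ((S) ^ 2 + 4 * H1 * H2 ^ 2 * P) as D eqn:HD.
  assert (hsS : S <= s).
  { destruct (Rle_dec S s) as [h|h]; [exact h|]. nra. }
  assert (hpos : 0 < s + S) by lra.
  remember (2 * H2 / (s + S)) as a eqn:ha.
  assert (haS : a * (s + S) = 2 * H2) by (rewrite ha; field; lra).
  assert (ha0 : 0 <= a).
  { rewrite ha. apply Rmult_le_pos; [lra | left; apply Rinv_0_lt_compat; lra]. }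
  assert (ha1 : a <= 1).
  { rewrite ha. apply Rmult_le_reg_r with (s + S); [lra|].
    unfold Rdiv; rewrite Rmult_assoc, Rinv_l by lra. lra. }
  assert (hq : H1 * H2 * P * a ^ 2 + S * a - H2 = 0).
  { rewrite ha.
    replace (H1 * H2 * P * (2 * H2 / (s + S)) ^ 2 + S * (2 * H2 / (s + S)) - H2)
      with (H2 * (4 * H1 * H2 ^ 2 * P + S ^ 2 - s * s) / (s + S) ^ 2)
      by (field; lra).
    rewrite hs2, HD, HS. unfold Rdiv. ring_simplify. reflexivity. }
  assert (heq : 1 + a * P * H1 = 1 + P * H2 * (1 - a) / (a * H2 * P + 1)).
  { assert (0 < a * H2 * P + 1) by (assert (0 <= a * H2 * P) by (apply Rmult_le_pos; [apply Rmult_le_pos|]; lra); lra).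
    apply (Rmult_eq_reg_r (a * H2 * P + 1)); [|lra].
    field_simplify; [|lra]. subst S. nra. }
  split; [lra|].
  intros al [h0 h1].
  unfold min_rate.
  assert (hm : Rmin (r1 P H1 a) (r2 P H2 a) = r1 P H1 a).
  { unfold r1, r2. rewrite heq. apply Rmin_left; lra. }
  rewrite hm.
  destruct (Rle_dec al a) as [hle|hgt].
  - eapply Rle_trans; [apply Rmin_l|]. unfold r1.
    assert (0 <= al * P * H1) by (apply Rmult_le_pos; [apply Rmult_le_pos|]; lra).
    assert (al * (P * H1) <= a * (P * H1)) by (apply Rmult_le_compat_r; [apply Rmult_le_pos|]; lra).
    apply log2_le; lra.
  - eapply Rle_trans; [apply Rmin_r|]. unfold r1. rewrite heq. unfold r2.
    assert (0 < a * H2 * P + 1) by (assert (0 <= a * H2 * P) by (apply Rmult_le_pos; [apply Rmult_le_pos|]; lra); lra).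
    assert (0 < al * H2 * P + 1) by (assert (0 <= al * H2 * P) by (apply Rmult_le_pos; [apply Rmult_le_pos|]; lra); lra).
    apply log2_le.
    + assert (0 <= P * H2 * (1 - al) / (al * H2 * P + 1)).
      { unfold Rdiv. apply Rmult_le_pos; [apply Rmult_le_pos; [apply Rmult_le_pos|]; lra | left; apply Rinv_0_lt_compat; lra]. }
      lra.
    + apply Rplus_le_compat_l. unfold Rdiv.
      apply Rmult_le_reg_r with ((al * H2 * P + 1) * (a * H2 * P + 1)); [apply Rmult_lt_0_compat; lra|].
      replace (P * H2 * (1 - al) * / (al * H2 * P + 1) * ((al * H2 * P + 1) * (a * H2 * P + 1)))
        with (P * H2 * (1 - al) * (a * H2 * P + 1)) by (field; lra).
      replace (P * H2 * (1 - a) * / (a * H2 * P + 1) * ((al * H2 * P + 1) * (a * H2 * P + 1)))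
        with (P * H2 * (1 - a) * (al * H2 * P + 1)) by (field; lra).
      assert (0 <= P * H2) by (apply Rmult_le_pos; lra).
      assert (0 <= P * H2 * (al - a) * (H2 * P + 1)) by (apply Rmult_le_pos; [apply Rmult_le_pos|]; lra).
      assert (E : P * H2 * (1 - a) * (al * H2 * P + 1) - P * H2 * (1 - al) * (a * H2 * P + 1)
                 = P * H2 * (al - a) * (H2 * P + 1)) by ring.
      lra.
Qed.
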